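(* Let $\mathcal{H}_\ell,\mathcal{H}_r$ be Hilbert spaces, $\mathcal{H}_S$ a finite-dimensional Hilbert space, $H_\ell,H_S,H_r$ self-adjoint operators on $\mathcal{H}_\ell,\mathcal{H}_S,\mathcal{H}_r$, and $\chi_\ell\in\mathcal{H}_\ell$, $\chi_r\in\mathcal{H}_r$, $\delta_\ell,\delta_r\in\mathcal{H}_S$ non-zero vectors. On $\mathcal{H}=\mathcal{H}_\ell\oplus\mathcal{H}_S\oplus\mathcal{H}_r$ let $H_0=H_\ell+H_S+H_r$ and $H_{\lambda,\nu}=H_0+\lambda[(\chi_\ell,\cdot)\delta_\ell+(\delta_\ell,\cdot)\chi_\ell]+\nu[(\chi_r,\cdot)\delta_r+(\delta_r,\cdot)\chi_r]$ for $\lambda,\nu\in\mathbb{R}$. Then for $z\in\mathbb{C}\setminus\mathbb{R}$, $$G_{\lambda,\nu}(\delta_\ell,\delta_\ell,z)=\frac{1}{D(z)}\Big[\big(1-\nu^2G_0(\chi_r,\chi_r,z)G_0(\delta_r,\delta_r,z)\big)G_0(\delta_\ell,\delta_\ell,z)+\nu^2G_0(\chi_r,\chi_r,z)G_0(\delta_\ell,\delta_r,z)G_0(\delta_r,\delta_\ell,z)\Big],$$ $$G_{\lambda,\nu}(\chi_\ell,\chi_\ell,z)=\frac{1}{D(z)}\Big[G_0(\chi_\ell,\chi_\ell,z)\big(1-\nu^2G_0(\chi_r,\chi_r,z)G_0(\delta_r,\delta_r,z)\big)\Big],$$ where $$D(z)=\big(1-\nu^2G_0(\chi_r,\chi_r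,z)G_0(\delta_r,\delta_r,z)\big)\big(1-\lambda^2G_0(\chi_\ell,\chi_\ell,z)G_0(\delta_\ell,\delta_\ell,z)\big)-\nu^2\lambda^2G_0(\chi_r,\chi_r,z)G_0(\chi_\ell,\chi_\ell,z)G_0(\delta_\ell,\delta_r,z)G_0(\delta_r,\delta_\ell,z).$$
   Context: For $\varphi,\psi\in\mathcal{H}$ and $z\in\mathbb{C}\setminus\mathbb{R}$, $G_{\lambda,\nu}(\varphi,\psi,z)=(\varphi,(H_{\lambda,\nu}-z)^{-1}\psi)$ and $G_0=G_{0,0}$ (the resolvent of $H_0$); the inner product is linear in the second argument. *)

(* Defs.v *)
From HB Require Import structures.
From mathcomp Require Import all_boot all_order all_algebra.
From mathcomp Require Import complex.
From mathcomp Require Import boolp classical_sets reals.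
Set Implicit Arguments.
Unset Strict Implicit.
Unset Printing Implicit Defensive.
Import Order.TTheory GRing.Theory Num.Theory.
Local Open Scope ring_scope.
Local Open Scope classical_set_scope.

(* Complex inner product, linear in the SECOND argument, antilinear in the first. *)
Definition inner_product (R : realType) (V : lmodType R[i])
    (ip : V -> V -> R[i]) : Prop :=
  [/\ (forall (a : R[i]) (x y w : V), ip x (a *: y + w) = a * ip x y + ip x w),
      (forall x y : V, ip y x = (ip x y)^*),
      (forall x : V, 0 <= ip x x) &
      (forall x : V, ip x x = 0 -> x = 0)].

Definition ipnorm (R : realType) (V : lmodType R[i]) (ip : V -> V -> R[i])
    (x : V) : R[i] := sqrtC (ip x x).

Definition is_hilbert (R : realType) (V : lmodType R[i])
    (ip : V -> V -> R[i]) : Prop :=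
  inner_product ip /\
  forall u : nat -> V,
    (forall eps : R[i], 0 < eps -> exists N : nat, forall m n : nat,
        (N <= m)%N -> (N <= n)%N -> ipnorm ip (u m - u n) < eps) ->
    exists v : V, forall eps : R[i], 0 < eps -> exists N : nat, forall n : nat,
        (N <= n)%N -> ipnorm ip (u n - v) < eps.

Definition finite_dim (R : realType) (V : lmodType R[i]) : Prop :=
  exists s : seq V, forall v : V, exists c : nat -> R[i],
    v = \sum_(i < size s) c i *: s`_i.

(* (Possibly unbounded) self-adjoint operator A with domain D:
   D is a dense linear subspace, A is linear on D, and A^* = A, i.e.
   D(A^* ) = {y | exists w, forall x in D, (w, x) = (y, A x)} equals D
   and A^* y = A y on D. *)
Definition self_adjoint (R : realType) (V : lmodType R[i])
    (ip : V -> V -> R[i]) (D : set V) (A : V -> V) : Prop :=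
  [/\ D 0,
      (forall (a : R[i]) (x y : V), D x -> D y ->
          D (a *: x + y) /\ A (a *: x + y) = a *: A x + A y),
      (forall (v : V) (eps : R[i]), 0 < eps ->
          exists x, D x /\ ipnorm ip (v - x) < eps),
      (forall x y : V, D x -> D y -> ip (A y) x = ip y (A x)) &
      (forall y w : V, (forall x, D x -> ip w x = ip y (A x)) -> D y)].

Definition resolvent (R : realType) (V : lmodType R[i]) (D : set V)
    (A : V -> V) (z : R[i]) (psi : V) : V :=
  match pselect (exists u : V, D u /\ A u - z *: u = psi) with
  | left h => projT1 (cid h)
  | right _ => 0
  end.

Definition green (R : realType) (V : lmodType R[i]) (ip : V -> V -> R[i])
    (D : set V) (A : V -> V) (phi psi : V) (z : R[i]) : R[i] :=
  ip phi (resolvent D A z psi).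

Section DirectSum.
Context (R : realType) (Vl VS Vr : lmodType R[i]).
Definition sumV := ((Vl * VS) * Vr)%type.

Definition sum_ip (ipl : Vl -> Vl -> R[i]) (ipS : VS -> VS -> R[i])
    (ipr : Vr -> Vr -> R[i]) (x y : sumV) : R[i] :=
  ipl x.1.1 y.1.1 + ipS x.1.2 y.1.2 + ipr x.2 y.2.

Definition inl3 (v : Vl) : sumV := (v, 0, 0).
Definition inS3 (v : VS) : sumV := (0, v, 0).
Definition inr3 (v : Vr) : sumV := (0, 0, v).

Definition dom0 (Dl : set Vl) (DS : set VS) (Dr : set Vr) : set sumV :=
  [set x | Dl x.1.1 /\ DS x.1.2 /\ Dr x.2].

Definition H0 (Hl : Vl -> Vl) (HS : VS -> VS) (Hr : Vr -> Vr) (x : sumV) : sumV :=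
  (Hl x.1.1, HS x.1.2, Hr x.2).

Definition Hlamnu (ipl : Vl -> Vl -> R[i]) (ipS : VS -> VS -> R[i])
    (ipr : Vr -> Vr -> R[i]) (Hl : Vl -> Vl) (HS : VS -> VS) (Hr : Vr -> Vr)
    (chil : Vl) (chir : Vr) (dl dr : VS) (lam nu : R) (x : sumV) : sumV :=
  let ip := sum_ip ipl ipS ipr in
  H0 Hl HS Hr x
  + (lam%:C)%C *: (ip (inl3 chil) x *: inS3 dl + ip (inS3 dl) x *: inl3 chil)
  + (nu%:C)%C *: (ip (inr3 chir) x *: inS3 dr + ip (inS3 dr) x *: inr3 chir).
End DirectSum.

(* Main.v *)
Require Import Defs.
From HB Require Import structures.
From mathcomp Require Import all_boot all_order all_algebra.
From mathcomp Require Import complex.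
From mathcomp Require Import boolp classical_sets reals.
From mathcomp Require Import ring lra.
Import Order.TTheory GRing.Theory Num.Theory.
Local Open Scope ring_scope.

Module Aux.
Set Implicit Arguments.
Unset Strict Implicit.
Unset Printing Implicit Defensive.
Local Open Scope classical_set_scope.

Lemma realC (R : realType) (r : R) : (r%:C)%C \is Num.real.
Proof. by apply/complex_realP; exists r. Qed.

Lemma conjE (R : realType) (c : R[i]) : c^* = (complex.Re c -i* complex.Im c)%C.
Proof.
have e : c = (complex.Re c)%:C%C + 'i * (complex.Im c)%:C%C.
  by case: c => a b; rewrite -complexiE; simpc.
rewrite [c in LHS]e conjC_rect ?realC //.
by rewrite -complexiE; simpc.
Qed.

Section Comp.
Variable R : realType.
Implicit Types c d : R[i].
Lemma ReD c d : complex.Re (c + d) = complex.Re c + complex.Re d.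
Proof. by case: c; case: d. Qed.
Lemma ImD c d : complex.Im (c + d) = complex.Im c + complex.Im d.
Proof. by case: c; case: d. Qed.
Lemma ReN c : complex.Re (- c) = - complex.Re c.
Proof. by case: c. Qed.
Lemma ImN c : complex.Im (- c) = - complex.Im c.
Proof. by case: c. Qed.
Lemma ReM c d : complex.Re (c * d) = complex.Re c * complex.Re d - complex.Im c * complex.Im d.
Proof. by case: c; case: d. Qed.
Lemma ImM c d : complex.Im (c * d) = complex.Re c * complex.Im d + complex.Im c * complex.Re d.
Proof. by case: c => a b; case: d => e f /=; rewrite addrC. Qed.
Lemma ReJ c : complex.Re (c^*) = complex.Re c.
Proof. by rewrite conjE. Qed.
Lemma ImJ c : complex.Im (c^*) = - complex.Im c.
Proof. by rewrite conjE. Qed.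
Lemma ReC (r : R) : complex.Re (r%:C)%C = r. Proof. by []. Qed.
Lemma ImC (r : R) : complex.Im (r%:C)%C = 0. Proof. by []. Qed.
Lemma Re_i : complex.Re ('i : R[i]) = 0. Proof. by []. Qed.
Lemma Im_i : complex.Im ('i : R[i]) = 1. Proof. by []. Qed.
Lemma ReIm_eq c d : complex.Re c = complex.Re d -> complex.Im c = complex.Im d -> c = d.
Proof. by case: c; case: d => /= a b e f -> ->. Qed.
End Comp.

Lemma sqC (R : realType) (r : R) : 0 <= r -> sqrtC (r%:C)%C = (Num.sqrt r)%:C%C.
Proof.
move=> r0.
by rewrite -[r in LHS]sqr_sqrtr // (rmorphXn (real_complex R)) /= sqrCK // ler0c sqrtr_ge0.
Qed.
Lemma sqC_lt (R : realType) (r e : R) : 0 <= r -> 0 < e ->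
  (sqrtC (r%:C)%C < (Num.sqrt e)%:C%C) = (r < e).
Proof. by move=> r0 e0; rewrite sqC // ltcR ltr_sqrt. Qed.
Lemma posC (R : realType) (eps : R[i]) : 0 < eps -> exists2 e : R, 0 < e & eps = (Num.sqrt e)%:C%C.
Proof.
case: eps => a b; rewrite ltcE /= => /andP[/eqP -> a0].
exists (a ^+ 2); first by rewrite exprn_gt0.
by rewrite sqrtr_sqr ger0_norm // ltW.
Qed.

Definition eta (R : realType) (n : nat) : R := (n.+1%:R)^-1.
Lemma eta_gt0 (R : realType) n : 0 < eta R n.
Proof. by rewrite /eta invr_gt0 ltr0n. Qed.
Lemma eta_le (R : realType) m n : (m <= n)%N -> eta R n <= eta R m.
Proof. by move=> h; rewrite /eta lef_pV2 ?posrE ?ltr0n // ler_nat ltnS. Qed.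
Lemma eta_small (R : realType) (r : R) : 0 < r -> exists M, eta R M < r.
Proof.
move=> r0; exists (Num.bound (r^-1)); rewrite /eta.
have h : r^-1 < (Num.bound r^-1)%:R by apply: archi_boundP; rewrite invr_ge0 ltW.
rewrite -[r]invrK ltf_pV2 ?posrE ?ltr0n ?invr_gt0 //.
by apply: (lt_le_trans h); rewrite invrK ler_nat.
Qed.

Section Hilb.
Variables (R : realType) (V : lmodType R[i]) (ip : V -> V -> R[i]).
Hypothesis hip : inner_product ip.

Let ipL : forall (a : R[i]) (x y w : V), ip x (a *: y + w) = a * ip x y + ip x w.
Proof. by case: hip. Qed.
Let ipC : forall x y : V, ip y x = (ip x y)^*.
Proof. by case: hip. Qed.
Let ipP : forall x : V, 0 <= ip x x.
Proof. by case: hip. Qed.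
Let ipD : forall x : V, ip x x = 0 -> x = 0.
Proof. by case: hip. Qed.

Lemma ip0r x : ip x 0 = 0.
Proof.
have := ipL 1 x 0 0; rewrite scaler0 add0r mul1r => h.
by apply: (addrI (ip x 0)); rewrite addr0 -h.
Qed.


Lemma ipJ x y : ip y x = (ip x y)^*.
Proof. exact: ipC. Qed.
Lemma ipD0 x : ip x x = 0 -> x = 0.
Proof. exact: ipD. Qed.
Lemma ipDr x y w : ip x (y + w) = ip x y + ip x w.
Proof. by rewrite -[y]scale1r ipL mul1r scale1r. Qed.
Lemma ipZr a x y : ip x (a *: y) = a * ip x y.
Proof. by rewrite -[a *: y]addr0 ipL ip0r addr0. Qed.
Lemma ipNr x y : ip x (- y) = - ip x y.
Proof. by rewrite -scaleN1r ipZr mulN1r. Qed.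
Lemma ipBr x y w : ip x (y - w) = ip x y - ip x w.
Proof. by rewrite ipDr ipNr. Qed.
Lemma ip0l y : ip 0 y = 0.
Proof. by rewrite ipC ip0r conjC0. Qed.
Lemma ipDl x y w : ip (x + y) w = ip x w + ip y w.
Proof. by rewrite ipC ipDr rmorphD /= -!ipC. Qed.
Lemma ipZl a x y : ip (a *: x) y = a^* * ip x y.
Proof. by rewrite ipC ipZr rmorphM /= -!ipC. Qed.
Lemma ipNl x y : ip (- x) y = - ip x y.
Proof. by rewrite ipC ipNr rmorphN /= -!ipC. Qed.
Lemma ipBl x y w : ip (x - y) w = ip x w - ip y w.
Proof. by rewrite ipDl ipNl. Qed.

Definition N x := complex.Re (ip x x).
Definition rp x y := complex.Re (ip x y).

Lemma ipxx x : ip x x = (N x)%:C%C.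
Proof.
rewrite /N; have := ipP x; case: (ip x x) => a b.
rewrite lecE /= => /andP[/eqP hb _]; by rewrite hb.
Qed.
Lemma N_ge0 x : 0 <= N x.
Proof. by have := ipP x; rewrite ipxx ler0c. Qed.
Lemma N_eq0 x : N x = 0 -> x = 0.
Proof. by move=> h; apply: ipD; rewrite ipxx h. Qed.


Lemma N_D x y : N (x + y) = N x + N y + 2 * rp x y.
Proof.
rewrite /N /rp ipDl !ipDr !ReD [ip y x]ipC ReJ; lra.
Qed.
Lemma N_Z a x : N (a *: x) = (complex.Re a ^+ 2 + complex.Im a ^+ 2) * N x.
Proof.
rewrite /N ipZl ipZr ipxx mulrA !ReM !ImM !ReJ !ImJ /=; ring.
Qed.
Lemma N_N x : N (- x) = N x.
Proof.
rewrite -scaleN1r N_Z ReN ImN (_ : complex.Re (1:R[i]) = 1) // (_ : complex.Im (1:R[i]) = 0) //.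
by rewrite oppr0 expr0n /= addr0 sqrrN expr1n mul1r.
Qed.
Lemma rpC x y : rp y x = rp x y.
Proof. by rewrite /rp ipC ReJ. Qed.
Lemma rp_Zr (t : R) x y : rp x ((t%:C)%C *: y) = t * rp x y.
Proof. by rewrite /rp ipZr ReM /= mul0r subr0. Qed.
Lemma rpNr x y : rp x (- y) = - rp x y.
Proof. by rewrite /rp ipNr ReN. Qed.

Lemma CS x y : rp x y ^+ 2 <= N x * N y.
Proof.
have key : forall t : R, 0 <= N x + 2 * t * rp x y + t ^+ 2 * N y.
  move=> t; have := N_ge0 (x + (t%:C)%C *: y).
  by rewrite N_D rp_Zr N_Z /= expr0n /= addr0; lra.
have hx := N_ge0 x; have hy := N_ge0 y.
have [y0|ypos] := eqVneq (N y) 0.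
  rewrite y0 mulr0; have [r0|rn0] := eqVneq (rp x y) 0.
    by rewrite r0 expr0n.
  have := key (- (N x + 1) / (2 * rp x y)); rewrite y0 mulr0 addr0.
  have e : 2 * (- (N x + 1) / (2 * rp x y)) * rp x y = - (N x + 1).
    by field; rewrite rn0.
  rewrite e; lra.
have yp : 0 < N y by rewrite lt_def ypos hy.
have := key (- rp x y / N y).
set r := rp x y => h.
have e : N x + 2 * (- r / N y) * r + (- r / N y) ^+ 2 * N y = N x - r ^+ 2 / N y.
  by field; rewrite gt_eqF.
rewrite e subr_ge0 ler_pdivrMr // in h; by rewrite mulrC.
Qed.

Lemma N_par x y : N (x - y) + N (x + y) = 2 * N x + 2 * N y.
Proof. rewrite !N_D N_N rpNr; lra. Qed.
Lemma N_le2 x y : N (x + y) <= 2 * N x + 2 * N y.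
Proof. rewrite -N_par; have := N_ge0 (x - y); lra. Qed.
Lemma N_sym x y : N (x - y) = N (y - x).
Proof. by rewrite -N_N opprB. Qed.
Lemma N_Zr (t : R) x : N ((t%:C)%C *: x) = t ^+ 2 * N x.
Proof. by rewrite N_Z /= expr0n /= addr0. Qed.

Lemma CS_Im x y : complex.Im (ip x y) ^+ 2 <= N x * N y.
Proof.
have := CS x ('i *: y); rewrite N_Z /= expr0n /= add0r expr1n mul1r.
by rewrite /rp ipZr ReM /= mul0r sub0r mul1r sqrrN.
Qed.

End Hilb.

Lemma vec1 (R : realType) (V : lmodType R[i]) (a b c : V) : a - b - (a - c) = - (b - c).
Proof. by rewrite !opprB addrC addrA subrK. Qed.
Lemma vec2 (R : realType) (V : lmodType R[i]) (p a b : V) :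
  p - a + (p - b) = (2%:R : R)%:C%C *: (p - (2^-1 *: a + 2^-1 *: b)).
Proof.
rewrite scalerBr scalerDr !scalerA (rmorph_nat (real_complex R)).
rewrite mulfV ?pnatr_eq0 // !scale1r scaler_nat mulr2n opprD.
by rewrite addrACA.
Qed.

Section SA.
Variables (R : realType) (V : lmodType R[i]) (ip : V -> V -> R[i]).
Hypothesis hip : inner_product ip.
Hypothesis hcomp : forall u : nat -> V,
    (forall eps : R[i], 0 < eps -> exists N : nat, forall m n : nat,
        (N <= m)%N -> (N <= n)%N -> ipnorm ip (u m - u n) < eps) ->
    exists v : V, forall eps : R[i], 0 < eps -> exists N : nat, forall n : nat,
        (N <= n)%N -> ipnorm ip (u n - v) < eps.
Variables (D : set V) (A : V -> V).
Hypothesis hsa : self_adjoint ip D A.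

Local Notation N := (N ip).
Local Notation rp := (rp ip).

Lemma norm_lt y e : 0 < e -> (ipnorm ip y < (Num.sqrt e)%:C%C) = (N y < e).
Proof. by move=> e0; rewrite /ipnorm (ipxx hip) sqC_lt // N_ge0. Qed.

Lemma complete_N (u : nat -> V) :
  (forall e : R, 0 < e -> exists M, forall m n, (M <= m)%N -> (M <= n)%N -> N (u m - u n) < e) ->
  exists v, forall e : R, 0 < e -> exists M, forall n, (M <= n)%N -> N (u n - v) < e.
Proof.
move=> hc; have [|v hv] := @hcomp u.
  move=> eps /posC [e e0 ->]; have [M hM] := hc e e0.
  by exists M => m n hm hn; rewrite norm_lt // hM.
exists v => e e0; have [|M hM] := hv (Num.sqrt e)%:C%C; first by rewrite ltcR sqrtr_gt0.
by exists M => n hn; rewrite -norm_lt // hM.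
Qed.

Let D0 : D 0. Proof. by case: hsa. Qed.
Let Dlin : forall (a : R[i]) (x y : V), D x -> D y ->
          D (a *: x + y) /\ A (a *: x + y) = a *: A x + A y.
Proof. by case: hsa. Qed.
Let Ddense : forall (v : V) (eps : R[i]), 0 < eps ->
          exists x, D x /\ ipnorm ip (v - x) < eps.
Proof. by case: hsa. Qed.
Let Asym : forall x y : V, D x -> D y -> ip (A y) x = ip y (A x).
Proof. by case: hsa. Qed.
Let Aadj : forall y w : V, (forall x, D x -> ip w x = ip y (A x)) -> D y.
Proof. by case: hsa. Qed.

Lemma dense_N v e : 0 < e -> exists x, D x /\ N (v - x) < e.
Proof.
move=> e0; have [|x [Dx hx]] := @Ddense v (Num.sqrt e)%:C%C; first by rewrite ltcR sqrtr_gt0.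
by exists x; split => //; rewrite -norm_lt.
Qed.

Lemma DB x y : D x -> D y -> D (x - y).
Proof. by move=> Dx Dy; have [] := Dlin (-1) Dy Dx; rewrite scaleN1r addrC. Qed.
Lemma AB x y : D x -> D y -> A (x - y) = A x - A y.
Proof. by move=> Dx Dy; have [] := Dlin (-1) Dy Dx; rewrite !scaleN1r addrC [- _ + _]addrC. Qed.
Lemma A0 : A 0 = 0.
Proof. by have := AB D0 D0; rewrite subrr => ->; rewrite subrr. Qed.
Lemma DZD a x y : D x -> D y -> D (a *: x + y).
Proof. by move=> Dx Dy; case: (Dlin a Dx Dy). Qed.
Lemma AZD a x y : D x -> D y -> A (a *: x + y) = a *: A x + A y.
Proof. by move=> Dx Dy; case: (Dlin a Dx Dy). Qed.
Lemma DD x y : D x -> D y -> D (x + y).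
Proof. by move=> Dx Dy; have := DZD 1 Dx Dy; rewrite scale1r. Qed.
Lemma AD x y : D x -> D y -> A (x + y) = A x + A y.
Proof. by move=> Dx Dy; have := AZD 1 Dx Dy; rewrite !scale1r. Qed.
Lemma DZ a x : D x -> D (a *: x).
Proof. by move=> Dx; have := DZD a Dx D0; rewrite addr0. Qed.
Lemma AZ a x : D x -> A (a *: x) = a *: A x.
Proof. by move=> Dx; have := AZD a Dx D0; rewrite addr0 A0 addr0. Qed.

Lemma density_zero v : (forall x, D x -> ip v x = 0) -> v = 0.
Proof.
move=> h; apply: (N_eq0 hip); have hv := N_ge0 hip v.
apply/eqP; rewrite eq_le hv andbT; rewrite leNgt; apply/negP => vp.
have h2 : 0 < N v / 2 by rewrite divr_gt0.
have [x [Dx hx]] := @dense_N v (N v / 2) h2.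
have hcs := CS hip v (v - x).
have e : rp v (v - x) = N v.
  by rewrite /rp (ipBr hip) ReD ReN (h x Dx) /= oppr0 addr0.
rewrite e in hcs.
have : N v ^+ 2 <= N v * (N v / 2) by apply: (le_trans hcs); rewrite ler_wpM2l // ltW.
nra.
Qed.

Lemma inj_A c u : c \notin Num.real -> D u -> A u = c *: u -> u = 0.
Proof.
move=> hc Du hA; apply: (N_eq0 hip).
have := Asym Du Du; rewrite hA (ipZl hip) (ipZr hip) => h.
have : (c - c^*) * ip u u = 0 by rewrite mulrBl h subrr.
move/eqP; rewrite mulf_eq0 => /orP[|]; last by rewrite (ipxx hip) => /eqP [].
by rewrite subr_eq0 eq_sym -CrealE (negbTE hc).
Qed.


Lemma lowb z v : D v -> complex.Im z ^+ 2 * N v <= N (A v - z *: v).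
Proof.
move=> Dv.
set a := complex.Re z; set b := complex.Im z.
have ez : z = (a%:C)%C + (b%:C)%C * 'i%C.
  by apply: ReIm_eq; rewrite ?(ReD, ImD, ReM, ImM) /= /a /b; ring.
set p := A v - (a%:C)%C *: v; set q := - (((b%:C)%C * 'i%C) *: v).
have eT : A v - z *: v = p + q by rewrite /p /q ez scalerDl opprD addrA.
have Nq : N q = b ^+ 2 * N v.
  by rewrite /q (N_N hip) (N_Z hip) ReM ImM /=; ring.
have hw : complex.Im (ip (A v) v) = 0.
  have h1 := Asym Dv Dv; have h2 := ipJ hip (A v) v.
  have : complex.Im (ip (A v) v) = - complex.Im (ip (A v) v).
    by rewrite -ImJ -h2 h1.
  lra.
have hpq : rp p q = 0.
  rewrite /rp /q (ipNr hip) (ipZr hip) /p (ipBl hip) (ipZl hip) (ipxx hip).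
  rewrite ReN !ReM !ImD !ImN !ImM !ReJ !ImJ hw /=; ring.
rewrite eT (N_D hip) Nq hpq; have := N_ge0 hip p; lra.
Qed.


Lemma zero_sq (r : R) : (forall e, 0 < e -> r ^+ 2 <= e) -> r = 0.
Proof.
move=> h; apply/eqP; apply/negPn/negP => r0.
have p : 0 < r ^+ 2 / 2 by rewrite divr_gt0 // exprn_even_gt0.
have := h _ p; have : 0 < r ^+ 2 by rewrite exprn_even_gt0.
lra.
Qed.

Lemma Dsub_lin z x y : D x -> D y ->
  A (x - y) - z *: (x - y) = (A x - z *: x) - (A y - z *: y).
Proof.
move=> Dx Dy; rewrite AB // scalerBr !opprB addrACA [in RHS]addrACA.
by rewrite [- A y + _]addrC.
Qed.

Lemma limit_closed z (uu : nat -> V) (u m : V) :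
  (forall n, D (uu n)) ->
  (forall e : R, 0 < e -> exists M, forall n, (M <= n)%N -> N (uu n - u) < e) ->
  (forall e : R, 0 < e -> exists M, forall n, (M <= n)%N -> N ((A (uu n) - z *: uu n) - m) < e) ->
  forall x, D x -> ip (m + z *: u) x = ip u (A x).
Proof.
move=> Du hu hm x Dx.
set c := ip (m + z *: u) x - ip u (A x).
suff : c = 0 by move/eqP; rewrite subr_eq0 => /eqP.
set K := complex.Re z ^+ 2 + complex.Im z ^+ 2.
have K0 : 0 <= K by rewrite addr_ge0 // sqr_ge0.
set C := (4 + 4 * K) * N x + 2 * N (A x).
have C0 : 0 <= C.
  by rewrite addr_ge0 ?mulr_ge0 ?addr_ge0 ?mulr_ge0 ?N_ge0 //; lra.
have key : forall e, 0 < e -> complex.Re c ^+ 2 <= e /\ complex.Im c ^+ 2 <= e.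
  move=> e e0; set dl := e / (C + 1).
  have dl0 : 0 < dl by rewrite divr_gt0 //; lra.
  have hdl : dl * C <= e.
    rewrite /dl mulrAC ler_pdivrMr; last lra.
    by rewrite ler_pM2l //; lra.
  have [M1 h1] := hu dl dl0; have [M2 h2] := hm dl dl0.
  set n := maxn M1 M2.
  have {h1}h1 := h1 n (leq_maxl _ _); have {h2}h2 := h2 n (leq_maxr _ _).
  set e1 := (m - (A (uu n) - z *: uu n)) + z *: (u - uu n).
  set e2 := u - uu n.
  have hc : c = ip e1 x - ip e2 (A x).
    have hs := Asym Dx (Du n).
    have hA : A (uu n) = (A (uu n) - z *: uu n) + z *: uu n by rewrite subrK.
    rewrite /c /e1 /e2 !(ipBl hip, ipDl hip, ipZl hip, ipNl hip).
    idtac.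
    rewrite -[ip (uu n) (A x)]hs.
    ring.
  have Ne1 : N e1 <= 2 * dl + 2 * K * dl.
    apply: (le_trans (N_le2 hip _ _)); rewrite (N_Z hip) -/K.
    rewrite (N_sym hip) (N_sym hip u).
    have := N_ge0 hip (uu n - u); have := N_ge0 hip (A (uu n) - z *: uu n - m).
    nra.
  have Ne2 : N e2 <= dl by rewrite /e2 (N_sym hip) ltW.
  have hNx := N_ge0 hip x; have hNAx := N_ge0 hip (A x).
  have hNe1 := N_ge0 hip e1; have hNe2 := N_ge0 hip e2.
  have b1 : N e1 * N x <= (2 * dl + 2 * K * dl) * N x by rewrite ler_wpM2r.
  have b2 : N e2 * N (A x) <= dl * N (A x) by rewrite ler_wpM2r.
  have r1 := CS hip e1 x; have r2 := CS hip e2 (A x).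
  have i1 := CS_Im hip e1 x; have i2 := CS_Im hip e2 (A x).
  rewrite /rp in r1 r2.
  rewrite hc ReD ImD ReN ImN; split.
    apply: (le_trans _ hdl); rewrite /C.
    set p1 := complex.Re (ip e1 x); set p2 := complex.Re (ip e2 (A x)).
    have : (p1 - p2) ^+ 2 <= 2 * p1 ^+ 2 + 2 * p2 ^+ 2.
      have := sqr_ge0 (p1 + p2); nra.
    nra.
  apply: (le_trans _ hdl); rewrite /C.
  set p1 := complex.Im (ip e1 x); set p2 := complex.Im (ip e2 (A x)).
  have : (p1 - p2) ^+ 2 <= 2 * p1 ^+ 2 + 2 * p2 ^+ 2.
    have := sqr_ge0 (p1 + p2); nra.
  nra.
apply: ReIm_eq; apply: zero_sq => e e0; by case: (key e e0).
Qed.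


Lemma T_lin z (a : R[i]) x y : D x -> D y ->
  A (a *: x + y) - z *: (a *: x + y) = a *: (A x - z *: x) + (A y - z *: y).
Proof.
move=> Dx Dy; rewrite AZD // scalerDr !scalerBr !scalerA [z * a]mulrC.
by rewrite opprD addrACA.
Qed.

Lemma exists_res z psi : z \notin Num.real -> exists u, D u /\ A u - z *: u = psi.
Proof.
move=> hz.
pose T u := A u - z *: u.
have imz : complex.Im z != 0 by move: hz; case: (z) => a b; rewrite complex_real.
set b2 := complex.Im z ^+ 2.
have b20 : 0 < b2 by rewrite /b2 exprn_even_gt0.
pose f u := N (psi - T u).
pose S := [set f u | u in D].
have Slb : has_lbound S by exists 0 => _ [u _ <-]; exact: N_ge0.
have Sne : S !=set0 by exists (f 0); exists 0.
have hinf : has_inf S by split.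
set d := inf S.
have dle : forall u, D u -> d <= f u by move=> u Du; apply: ge_inf Slb _ _; exists u.
have dgt : -1 < d.
  have [_ [u Du <-] he] := inf_adherent ltr01 hinf.
  have := N_ge0 hip (psi - T u); rewrite -/d in he; lra.
have [uu huu] : exists uu : nat -> V, forall n, D (uu n) /\ f (uu n) < d + eta R n.
  have h : forall n, exists u, D u /\ f u < d + eta R n.
    move=> n; have [_ [u Du <-] he] := inf_adherent (eta_gt0 R n) hinf; by exists u.
  by have [g hg] := boolp.choice h; exists g.
have Duu : forall n, D (uu n) by move=> n; case: (huu n).
have par : forall n k, N (T (uu n) - T (uu k)) <= 2 * eta R n + 2 * eta R k.
  move=> n k; have [Dn fn] := huu n; have [Dk fk] := huu k.
  set mid := 2^-1 *: uu n + 2^-1 *: uu k.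
  have Dm : D mid by rewrite /mid; apply: DZD => //; apply: DZ.
  have Tm : T mid = 2^-1 *: T (uu n) + 2^-1 *: T (uu k).
    rewrite /T /mid T_lin //; last by apply: DZ.
    by rewrite -[2^-1 *: uu k]addr0 T_lin // A0 scaler0 subr0 addr0.
  have fm := dle mid Dm.
  have hp := N_par hip (psi - T (uu n)) (psi - T (uu k)).
  have e1 := vec1 psi (T (uu n)) (T (uu k)).
  have e2 := vec2 psi (T (uu n)) (T (uu k)).
  rewrite -Tm in e2.
  rewrite e1 e2 (N_N hip) (N_Zr hip) in hp.
  rewrite /f in fn fk fm.
  lra.
have cau : forall e : R, 0 < e -> exists M, forall n k, (M <= n)%N -> (M <= k)%N ->
    N (T (uu n) - T (uu k)) < e /\ N (uu n - uu k) < e.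
  move=> e e0.
  have e40 : 0 < Num.min (e / 4) (e * b2 / 4).
    by rewrite lt_min; apply/andP; split; rewrite divr_gt0 // mulr_gt0.
  have [M hM] := eta_small e40.
  exists M => n k hn hk.
  have hn' := le_lt_trans (eta_le R hn) hM; have hk' := le_lt_trans (eta_le R hk) hM.
  rewrite lt_min in hn'; rewrite lt_min in hk'.
  case/andP: hn' => hn1 hn2; case/andP: hk' => hk1 hk2.
  have hpar := par n k.
  have hlow := lowb z (DB (Duu n) (Duu k)).
  rewrite Dsub_lin ?Duu // -/b2 in hlow.
  split; first lra.
  have : b2 * N (uu n - uu k) < b2 * e.
    apply: (le_lt_trans hlow); apply: (le_lt_trans hpar).
    rewrite mulrC; lra.
  by rewrite ltr_pM2l.
have [u hu] := complete_N (fun e e0 => let: ex_intro M hM := cau e e0 in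
   ex_intro _ M (fun m n hm hn => proj2 (hM m n hm hn))).
have [m hm] := complete_N (u := fun n => T (uu n)) (fun e e0 => let: ex_intro M hM := cau e e0 in
   ex_intro _ M (fun m n hm hn => proj1 (hM m n hm hn))).
have hcl := limit_closed Duu hu hm.
have Du : D u by apply: (Aadj (w := m + z *: u)) => x Dx; rewrite hcl.
have Tu : T u = m.
  have : A u - (m + z *: u) = 0.
    apply: density_zero => x Dx.
    by rewrite (ipBl hip) Asym // hcl // subrr.
  by rewrite /T => /eqP; rewrite subr_eq0 => /eqP ->; rewrite addrK.
have Tu' : A u - z *: u = m := Tu.
have fu : f u <= d.
  rewrite leNgt; apply/negP => hlt.
  set g := f u - d.
  have g0 : 0 < g by rewrite subr_gt0.
  set K := d + 2.
  have K0 : 0 < K by rewrite /K; lra.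
  have g30 : 0 < g / 3 by rewrite divr_gt0.
  have [M1 hM1] := eta_small g30.
  have q0 : 0 < Num.min (g / 3) (g ^+ 2 / (36 * K)).
    by rewrite lt_min; apply/andP; split; rewrite // divr_gt0 ?mulr_gt0 ?exprn_gt0.
  have [M2 hM2] := hm _ q0.
  set n := maxn M1 M2.
  have hn1 : eta R n < g / 3 := le_lt_trans (eta_le R (leq_maxl _ _)) hM1.
  have hn2 := hM2 n (leq_maxr _ _); rewrite lt_min in hn2.
  case/andP: hn2 => hb1 hb2.
  have [_ fn] := huu n.
  have eta1 : eta R n <= 1 by have := eta_le R (leq0n n); rewrite /eta invr1.
  have ev : psi - T u = (psi - T (uu n)) + (T (uu n) - m) by rewrite Tu addrA subrK.
  have hfu : f u = N (psi - T (uu n)) + N (T (uu n) - m) + 2 * rp (psi - T (uu n)) (T (uu n) - m).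
    by rewrite /f ev (N_D hip).
  have cs := CS hip (psi - T (uu n)) (T (uu n) - m).
  set a := N (psi - T (uu n)) in hfu cs; set b := N (T (uu n) - m) in hfu cs hb1 hb2.
  set r := rp (psi - T (uu n)) (T (uu n) - m) in hfu cs.
  have a0 : 0 <= a := N_ge0 hip _; have b0 : 0 <= b := N_ge0 hip _.
  have aK : a <= K by rewrite /a /K; move: fn; rewrite /f; lra.
  have c1 : r ^+ 2 <= K * b by apply: (le_trans cs); rewrite ler_wpM2r.
  have c2 : K * b < g ^+ 2 / 36.
    have e : K * (g ^+ 2 / (36 * K)) = g ^+ 2 / 36 by field; rewrite gt_eqF.
    by rewrite -e ltr_pM2l.
  have r6 : r < g / 6 by nra.
  rewrite /f -/a in fn.
  have : f u < d + g by rewrite hfu; lra.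
  rewrite /g; lra.
have orth : forall x, D x -> ip (psi - m) (A x - z *: x) = 0.
  move=> x Dx.
  set w := psi - m; set y := A x - z *: x; set c := ip w y.
  have key : forall t : R[i], N w <= N (w - t *: y).
    move=> t; have D' : D (t *: x + u) by apply: DZD.
    have := dle _ D'; rewrite /f /T T_lin // Tu'.
    have -> : psi - (t *: (A x - z *: x) + m) = w - t *: y by rewrite opprD addrCA addrC.
    by move=> h; apply: le_trans h; move: fu; rewrite /f Tu.
  set q := complex.Re c ^+ 2 + complex.Im c ^+ 2.
  have q0 : 0 <= q by rewrite addr_ge0 ?sqr_ge0.
  set s := (N y + 1)^-1.
  have s0 : 0 < s by rewrite invr_gt0; have := N_ge0 hip y; lra.
  have sy : s * N y < 1.
    by rewrite /s mulrC ltr_pdivrMr; [lra | have := N_ge0 hip y; lra].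
  have := key ((s%:C)%C * c^*).
  rewrite -[w - _]/(w + - _) (N_D hip) (N_N hip) (rpNr hip) (N_Z hip).
  rewrite /rp (ipZr hip) -/c !ReM !ImM !ReJ !ImJ /=.
  move=> hk.
  have hq : 0 <= s * q * (s * N y - 2).
    by move: hk; rewrite /q; lra.
  have : q <= 0.
    have hneg : s * N y - 2 < 0 by lra.
    have : s * q <= 0.
      by move: hq; rewrite nmulr_lge0.
    by rewrite pmulr_rle0.
  move=> ql; have q00 : q = 0 by apply/eqP; rewrite eq_le ql q0.
  have hre : complex.Re c = 0.
    by apply: zero_sq => e e0; have := sqr_ge0 (complex.Im c); rewrite /q in q00; lra.
  have him : complex.Im c = 0.
    by apply: zero_sq => e e0; have := sqr_ge0 (complex.Re c); rewrite /q in q00; lra.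
  by apply: ReIm_eq; [rewrite hre | rewrite him].
set w := psi - m.
have hw : forall x, D x -> ip w (A x) = ip (z^* *: w) x.
  move=> x Dx; rewrite (ipZl hip) conjCK.
  have -> : A x = (A x - z *: x) + z *: x by rewrite subrK.
  by rewrite (ipDr hip) orth // add0r (ipZr hip).
have Dw : D w by apply: (Aadj (w := z^* *: w)) => x Dx; rewrite hw.
have Aw : A w = z^* *: w.
  have : A w - z^* *: w = 0.
    apply: density_zero => x Dx.
    by rewrite (ipBl hip) Asym // hw // subrr.
  by move/eqP; rewrite subr_eq0 => /eqP.
have hz' : z^* \notin Num.real by rewrite CrealE conjCK eq_sym -CrealE.
have w0 := inj_A hz' Dw Aw.
exists u; split => //; rewrite Tu'.
by move/eqP: w0; rewrite subr_eq0 => /eqP.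
Qed.

End SA.

End Aux.
Import Aux.

Module Aux2.
Set Implicit Arguments.
Unset Strict Implicit.
Unset Printing Implicit Defensive.

Lemma inj_gen (R : realType) (V : lmodType R[i]) (ip : V -> V -> R[i])
  (hip : inner_product ip) (D : set V) (A : V -> V) (c : R[i]) (u : V) :
  (forall x y, D x -> D y -> ip (A y) x = ip y (A x)) ->
  c \notin Num.real -> D u -> A u - c *: u = 0 -> u = 0.
Proof.
move=> Asym hc Du /eqP; rewrite subr_eq0 => /eqP hA; apply: (ipD0 hip).
have := Asym _ _ Du Du; rewrite hA (ipZl hip) (ipZr hip) => h.
have : (c - c^*) * ip u u = 0 by rewrite mulrBl h subrr.
move/eqP; rewrite mulf_eq0 => /orP[|/eqP //].
by rewrite subr_eq0 eq_sym -CrealE (negbTE hc).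
Qed.

Lemma res_unique (R : realType) (V : lmodType R[i]) (ip : V -> V -> R[i])
  (hip : inner_product ip) (D : set V) (A : V -> V) (z : R[i]) (psi u : V) :
  (forall x y, D x -> D y -> D (x - y)) ->
  (forall x y, D x -> D y -> A (x - y) = A x - A y) ->
  (forall x y, D x -> D y -> ip (A y) x = ip y (A x)) ->
  z \notin Num.real -> D u -> A u - z *: u = psi -> resolvent D A z psi = u.
Proof.
move=> DB AB Asym hz Du hu; rewrite /resolvent.
case: pselect => [h|[]]; last by exists u.
case: (cid h) => v [Dv hv] /=.
apply/eqP; rewrite -subr_eq0; apply/eqP; apply: (inj_gen hip Asym hz (DB _ _ Dv Du)).
rewrite AB // scalerBr; apply/eqP; rewrite subr_eq0; apply/eqP.
move/eqP: hv; rewrite subr_eq => /eqP ->; move/eqP: hu; rewrite subr_eq => /eqP ->.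
by rewrite opprD addrACA subrr add0r.
Qed.

Lemma vlin2 (R : realType) (V : lmodType R[i]) (a b c d : V) : (a - b) + (c - d) = (a + c) - (b + d).
Proof. by rewrite opprD addrACA. Qed.
Lemma vlin3 (R : realType) (V : lmodType R[i]) (a b c d e f : V) :
  (a - b) + (c - d) + (e - f) = (a + c + e) - (b + d + f).
Proof. by rewrite !vlin2. Qed.
Lemma T_Z (R : realType) (V : lmodType R[i]) (ip : V -> V -> R[i]) (D : set V) (A : V -> V)
  (hsa : self_adjoint ip D A) z a x : D x -> A (a *: x) - z *: (a *: x) = a *: (A x - z *: x).
Proof. by move=> Dx; rewrite (AZ hsa) // scalerBr !scalerA mulrC. Qed.
Lemma sym_of (R : realType) (V : lmodType R[i]) (ip : V -> V -> R[i]) (D : set V) (A : V -> V)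
  (hsa : self_adjoint ip D A) x y : D x -> D y -> ip (A y) x = ip y (A x).
Proof. by case: hsa => _ _ _ h _; apply: h. Qed.

Section Sum.
Variables (R : realType) (Vl VS Vr : lmodType R[i]).
Variables (ipl : Vl -> Vl -> R[i]) (ipS : VS -> VS -> R[i]) (ipr : Vr -> Vr -> R[i]).
Hypotheses (hipl : inner_product ipl) (hipS : inner_product ipS) (hipr : inner_product ipr).
Variables (Dl : set Vl) (Hl : Vl -> Vl) (DS : set VS) (HS : VS -> VS) (Dr : set Vr) (Hr : Vr -> Vr).
Hypotheses (saHl : self_adjoint ipl Dl Hl) (saHS : self_adjoint ipS DS HS)
  (saHr : self_adjoint ipr Dr Hr).
Variables (chil : Vl) (chir : Vr) (dl dr : VS) (lam nu : R).

Local Notation V := (sumV Vl VS Vr).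
Local Notation ip := (sum_ip ipl ipS ipr).
Local Notation H := (Hlamnu ipl ipS ipr Hl HS Hr chil chir dl dr lam nu).
Local Notation Dom := (dom0 Dl DS Dr).
Local Notation L := ((lam%:C)%C : R[i]).
Local Notation Nn := ((nu%:C)%C : R[i]).

Lemma sumV_eq (u v : V) : u.1.1 = v.1.1 -> u.1.2 = v.1.2 -> u.2 = v.2 -> u = v.
Proof. by case: u => [[a b] c]; case: v => [[a' b'] c'] /= -> -> ->. Qed.

Lemma hip : inner_product ip.
Proof.
split.
- move=> a x y w; rewrite /sum_ip /=.
  rewrite (ipDr hipl) (ipDr hipS) (ipDr hipr) !(ipZr hipl, ipZr hipS, ipZr hipr); ring.
- move=> x y; rewrite /sum_ip !rmorphD /=.
  by rewrite -(ipJ hipl) -(ipJ hipS) -(ipJ hipr).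
- move=> x; rewrite /sum_ip.
  by rewrite !addr_ge0 //; [case: hipl | case: hipS | case: hipr].
- move=> x; rewrite /sum_ip => /eqP.
  have h1 : 0 <= ipl x.1.1 x.1.1 by case: hipl.
  have h2 : 0 <= ipS x.1.2 x.1.2 by case: hipS.
  have h3 : 0 <= ipr x.2 x.2 by case: hipr.
  rewrite paddr_eq0 ?addr_ge0 // paddr_eq0 // => /andP[/andP[/eqP e1 /eqP e2] /eqP e3].
  apply: sumV_eq => /=; [exact: (ipD0 hipl) | exact: (ipD0 hipS) | exact: (ipD0 hipr)].
Qed.

Lemma ip_cl x : ip (inl3 VS Vr chil) x = ipl chil x.1.1.
Proof. by rewrite /sum_ip /= (ip0l hipS) (ip0l hipr) !addr0. Qed.
Lemma ip_cr x : ip (inr3 Vl VS chir) x = ipr chir x.2.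
Proof. by rewrite /sum_ip /= (ip0l hipS) (ip0l hipl) !add0r. Qed.
Lemma ip_S (d : VS) x : ip (inS3 Vl Vr d) x = ipS d x.1.2.
Proof. by rewrite /sum_ip /= (ip0l hipl) (ip0l hipr) add0r addr0. Qed.

Lemma H_l x : (H x).1.1 = Hl x.1.1 + (L * ipS dl x.1.2) *: chil.
Proof.
by rewrite /Hlamnu /= ip_S !(scaler0, add0r, addr0) scalerA.
Qed.
Lemma H_S x : (H x).1.2 = HS x.1.2 + (L * ipl chil x.1.1) *: dl + (Nn * ipr chir x.2) *: dr.
Proof. by rewrite /Hlamnu /= ip_cl ip_cr !(scaler0, add0r, addr0) !scalerA. Qed.
Lemma H_r x : (H x).2 = Hr x.2 + (Nn * ipS dr x.1.2) *: chir.
Proof. by rewrite /Hlamnu /= !ip_S !(scaler0, add0r, addr0) scalerA. Qed.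


Lemma DomB x y : Dom x -> Dom y -> Dom (x - y).
Proof.
move=> [hx1 [hx2 hx3]] [hy1 [hy2 hy3]]; split; [|split] => /=.
- exact: (DB saHl).
- exact: (DB saHS).
- exact: (DB saHr).
Qed.

Lemma p11B (u v : V) : (u - v).1.1 = u.1.1 - v.1.1. Proof. by []. Qed.
Lemma p12B (u v : V) : (u - v).1.2 = u.1.2 - v.1.2. Proof. by []. Qed.
Lemma p2B (u v : V) : (u - v).2 = u.2 - v.2. Proof. by []. Qed.

Lemma HB x y : Dom x -> Dom y -> H (x - y) = H x - H y.
Proof.
move=> [hx1 [hx2 hx3]] [hy1 [hy2 hy3]]; apply: sumV_eq.
- rewrite (H_l (x - y)) !p11B (H_l x) (H_l y) !p12B (AB saHl) // (ipBr hipS).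
  by rewrite mulrBr scalerBl vlin2.
- rewrite (H_S (x - y)) !p12B (H_S x) (H_S y) !p11B !p2B (AB saHS) // (ipBr hipl) (ipBr hipr).
  by rewrite !mulrBr !scalerBl vlin3.
- rewrite (H_r (x - y)) !p2B (H_r x) (H_r y) !p12B (AB saHr) // (ipBr hipS).
  by rewrite mulrBr scalerBl vlin2.
Qed.

Lemma Hsym x y : Dom x -> Dom y -> ip (H y) x = ip y (H x).
Proof.
move=> [hx1 [hx2 hx3]] [hy1 [hy2 hy3]].
rewrite /sum_ip (H_l x) (H_l y) (H_S x) (H_S y) (H_r x) (H_r y).
rewrite !(ipDl hipl, ipDl hipS, ipDl hipr, ipZl hipl, ipZl hipS, ipZl hipr).
rewrite !(ipDr hipl, ipDr hipS, ipDr hipr, ipZr hipl, ipZr hipS, ipZr hipr).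
rewrite (sym_of saHl) // (sym_of saHS) // (sym_of saHr) //.
rewrite !rmorphM /= !(conj_Creal (realC lam), conj_Creal (realC nu)).
rewrite -!(ipJ hipl) -!(ipJ hipS) -!(ipJ hipr).
ring.
Qed.

Lemma p11Z a (u : V) : (a *: u).1.1 = a *: u.1.1. Proof. by []. Qed.
Lemma p12Z a (u : V) : (a *: u).1.2 = a *: u.1.2. Proof. by []. Qed.
Lemma p2Z a (u : V) : (a *: u).2 = a *: u.2. Proof. by []. Qed.

Lemma Hcomp z x s t y ul sl sr ur : Dl ul -> DS sl -> DS sr -> Dr ur ->
  Hl ul - z *: ul = chil -> HS sl - z *: sl = dl -> HS sr - z *: sr = dr ->
  Hr ur - z *: ur = chir ->
  H ((x *: ul, s *: sl + t *: sr, y *: ur) : V) - z *: ((x *: ul, s *: sl + t *: sr, y *: ur) : V) =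
  (((x + L * (s * ipS dl sl + t * ipS dl sr)) *: chil,
   (s + L * (x * ipl chil ul)) *: dl + (t + Nn * (y * ipr chir ur)) *: dr,
   (y + Nn * (s * ipS dr sl + t * ipS dr sr)) *: chir) : V).
Proof.
move=> Dul Dsl Dsr Dur hul hsl hsr hur.
set u := ((x *: ul, s *: sl + t *: sr, y *: ur) : V).
apply: sumV_eq.
- rewrite p11B p11Z (H_l u) /= (ipDr hipS) !(ipZr hipS) addrAC (T_Z saHl) // hul.
  by rewrite scalerDl.
- rewrite p12B p12Z (H_S u) /= (ipZr hipl) (ipZr hipr) addrAC.
  rewrite [HS _ + _ - _]addrAC (T_lin saHS z s Dsl (DZ saHS t Dsr)) /reverse_coercion (T_Z saHS z t Dsr).
  by rewrite hsl hsr [s *: dl + _ + _]addrAC -scalerDl -addrA -scalerDl.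
- rewrite p2B p2Z (H_r u) /= (ipDr hipS) !(ipZr hipS) addrAC (T_Z saHr) // hur.
  by rewrite scalerDl.
Qed.

End Sum.


Lemma kernel2 (R : realType) (a b c d : R[i]) : a * d - b * c = 0 ->
  exists s t : R[i], (s != 0 \/ t != 0) /\ a * s + b * t = 0 /\ c * s + d * t = 0.
Proof.
move=> h.
have [ab|ab] := boolP ((b != 0) || (a != 0)).
  exists b, (- a); split; first by case/orP: ab; [left|right; rewrite oppr_eq0].
  split; first by ring.
  by rewrite -[RHS]oppr0 -h; ring.
move: ab; rewrite negb_or !negbK => /andP[/eqP b0 /eqP a0].
have [cd|cd] := boolP ((d != 0) || (c != 0)).
  exists d, (- c); split; first by case/orP: cd; [left|right; rewrite oppr_eq0].
  by rewrite a0 b0; split; ring.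
move: cd; rewrite negb_or !negbK => /andP[/eqP d0 /eqP c0].
exists 1, 0; split; first by left; rewrite oner_eq0.
by rewrite a0 b0 c0 d0; split; ring.
Qed.

End Aux2.
Import Aux2.


Theorem lemma2p1 (R : realType) (Vl VS Vr : lmodType R[i])
    (ipl : Vl -> Vl -> R[i]) (ipS : VS -> VS -> R[i]) (ipr : Vr -> Vr -> R[i])
    (hl : is_hilbert ipl) (hS : is_hilbert ipS) (hr : is_hilbert ipr)
    (fdS : finite_dim VS)
    (Dl : set Vl) (Hl : Vl -> Vl) (DS : set VS) (HS : VS -> VS)
    (Dr : set Vr) (Hr : Vr -> Vr)
    (saHl : self_adjoint ipl Dl Hl) (saHS : self_adjoint ipS DS HS)
    (saHr : self_adjoint ipr Dr Hr)
    (chil : Vl) (chir : Vr) (dl dr : VS)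
    (chil0 : chil != 0) (chir0 : chir != 0) (dl0 : dl != 0) (dr0 : dr != 0)
    (lam nu : R) (z : R[i]) (hz : z \notin Num.real) :
  let ip := sum_ip ipl ipS ipr in
  let D0 := dom0 Dl DS Dr in
  let G0 := fun phi psi : sumV Vl VS Vr => green ip D0 (H0 Hl HS Hr) phi psi z in
  let G := fun phi psi : sumV Vl VS Vr =>
    green ip D0 (Hlamnu ipl ipS ipr Hl HS Hr chil chir dl dr lam nu) phi psi z in
  let cl := inl3 VS Vr chil in
  let cr := inr3 Vl VS chir in
  let el := inS3 Vl Vr dl in
  let er := inS3 Vl Vr dr in
  let nu2 := (nu ^+ 2)%:C%C in
  let lam2 := (lam ^+ 2)%:C%C in
  let Dz := (1 - nu2 * G0 cr cr * G0 er er) * (1 - lam2 * G0 cl cl * G0 el el)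
            - nu2 * lam2 * G0 cr cr * G0 cl cl * G0 el er * G0 er el in
  G el el = ((1 - nu2 * G0 cr cr * G0 er er) * G0 el el
             + nu2 * G0 cr cr * G0 el er * G0 er el) / Dz
  /\ G cl cl = (G0 cl cl * (1 - nu2 * G0 cr cr * G0 er er)) / Dz.
Proof.
move=> ip D0 G0 G cl cr el er nu2 lam2 Dz.
have [hipl hcl] := hl; have [hipS hcS] := hS; have [hipr hcr] := hr.
have [ul [Dul hul]] := exists_res hipl hcl saHl chil hz.
have [sl [Dsl hsl]] := exists_res hipS hcS saHS dl hz.
have [sr [Dsr hsr]] := exists_res hipS hcS saHS dr hz.
have [ur [Dur hur]] := exists_res hipr hcr saHr chir hz.
pose U (x s t y : R[i]) : sumV Vl VS Vr := (x *: ul, s *: sl + t *: sr, y *: ur).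
set gl := ipl chil ul; set gr := ipr chir ur.
set a11 := ipS dl sl; set a12 := ipS dl sr; set a21 := ipS dr sl; set a22 := ipS dr sr.
pose Tup (lm nv : R) (x s t y : R[i]) : sumV Vl VS Vr :=
  ((x + (lm%:C)%C * (s * a11 + t * a12)) *: chil,
   (s + (lm%:C)%C * (x * gl)) *: dl + (t + (nv%:C)%C * (y * gr)) *: dr,
   (y + (nv%:C)%C * (s * a21 + t * a22)) *: chir).
have hsip := hip hipl hipS hipr.
have DU : forall x s t y, D0 (U x s t y).
  move=> x s t y; split; [|split] => /=.
  - exact: (DZ saHl).
  - by apply: (DZD saHS) => //; apply: (DZ saHS).
  - exact: (DZ saHr).
have HU : forall lm nv x s t y,
  Hlamnu ipl ipS ipr Hl HS Hr chil chir dl dr lm nv (U x s t y) - z *: U x s t y = Tup lm nv x s t y.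
  move=> lm nv x s t y.
  exact (Hcomp hipl hipS hipr saHl saHS saHr lm nv x s t y Dul Dsl Dsr Dur hul hsl hsr hur).
have res : forall lm nv x s t y psi, Tup lm nv x s t y = psi ->
    resolvent D0 (Hlamnu ipl ipS ipr Hl HS Hr chil chir dl dr lm nv) z psi = U x s t y.
  move=> lm nv x s t y psi hpsi.
  apply: (res_unique hsip) => //.
  - by move=> a b; apply: (DomB saHl saHS saHr).
  - by move=> a b; apply: (HB hipl hipS hipr saHl saHS saHr).
  - by move=> a b; apply: (Hsym hipl hipS hipr saHl saHS saHr).
  - by rewrite HU.
have HH : H0 Hl HS Hr = Hlamnu ipl ipS ipr Hl HS Hr chil chir dl dr 0 0.
  apply: funext => v; apply: sumV_eq.
  - by rewrite (H_l ipS hipl hipr) (_ : (0:R)%:C%C = 0) // mul0r scale0r addr0.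
  - by rewrite (H_S hipl hipS hipr) (_ : (0:R)%:C%C = 0) // !mul0r !scale0r !addr0.
  - by rewrite (H_r ipS hipl hipr) (_ : (0:R)%:C%C = 0) // mul0r scale0r addr0.
have C0 : ((0:R)%:C)%C = 0 :> R[i] by [].
have ipU_cl : forall x s t y, ip cl (U x s t y) = x * gl.
  by move=> x s t y; rewrite /ip (ip_cl ipl hipS hipr) /= (ipZr hipl).
have ipU_cr : forall x s t y, ip cr (U x s t y) = y * gr.
  by move=> x s t y; rewrite /ip (ip_cr ipr hipl hipS) /= (ipZr hipr).
have ipU_el : forall x s t y, ip el (U x s t y) = s * a11 + t * a12.
  by move=> x s t y; rewrite /ip (ip_S ipS hipl hipr) /= (ipDr hipS) !(ipZr hipS).
have ipU_er : forall x s t y, ip er (U x s t y) = s * a21 + t * a22.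
  by move=> x s t y; rewrite /ip (ip_S ipS hipl hipr) /= (ipDr hipS) !(ipZr hipS).
have G0cl : G0 cl cl = gl.
  rewrite /G0 /green HH (res 0 0 1 0 0 0 cl); first by rewrite ipU_cl mul1r.
  by apply: sumV_eq; rewrite /= C0 !(mul0r, mulr0, add0r, addr0, mul1r, scale0r, scale1r, scaler0).
have G0cr : G0 cr cr = gr.
  rewrite /G0 /green HH (res 0 0 0 0 0 1 cr); first by rewrite ipU_cr mul1r.
  by apply: sumV_eq; rewrite /= C0 !(mul0r, mulr0, add0r, addr0, mul1r, scale0r, scale1r, scaler0).
have hel : Tup 0 0 0 1 0 0 = el.
  by apply: sumV_eq; rewrite /= C0 !(mul0r, mulr0, add0r, addr0, mul1r, scale0r, scale1r, scaler0).
have her : Tup 0 0 0 0 1 0 = er.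
  by apply: sumV_eq; rewrite /= C0 !(mul0r, mulr0, add0r, addr0, mul1r, scale0r, scale1r, scaler0).
have G0el : G0 el el = a11.
  by rewrite /G0 /green HH (res _ _ _ _ _ _ _ hel) ipU_el; ring.
have G0ler : G0 el er = a12.
  by rewrite /G0 /green HH (res _ _ _ _ _ _ _ her) ipU_el; ring.
have G0rel : G0 er el = a21.
  by rewrite /G0 /green HH (res _ _ _ _ _ _ _ hel) ipU_er; ring.
have G0er : G0 er er = a22.
  by rewrite /G0 /green HH (res _ _ _ _ _ _ _ her) ipU_er; ring.
set L := ((lam%:C)%C : R[i]); set Nn := ((nu%:C)%C : R[i]).
have enu : nu2 = Nn * Nn by rewrite /nu2 (rmorphXn (real_complex R)) expr2.
have elam : lam2 = L * L by rewrite /lam2 (rmorphXn (real_complex R)) expr2.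
set a := 1 - L * L * gl * a11; set b := - (L * L * gl * a12).
set c := - (Nn * Nn * gr * a21); set d := 1 - Nn * Nn * gr * a22.
have eDz : Dz = a * d - b * c.
  by rewrite /Dz G0cl G0cr G0el G0ler G0rel G0er enu elam /a /b /c /d; ring.
have hsym : forall x y, D0 x -> D0 y ->
    ip (Hlamnu ipl ipS ipr Hl HS Hr chil chir dl dr lam nu y) x =
    ip y (Hlamnu ipl ipS ipr Hl HS Hr chil chir dl dr lam nu x).
  by move=> x y; apply: (Hsym hipl hipS hipr saHl saHS saHr).
have Dz0 : Dz != 0.
  apply/eqP => hD; rewrite eDz in hD.
  have [s [t [nz [h1 h2]]]] := @kernel2 R a b c d hD.
  set bb := s * a11 + t * a12; set gg := s * a21 + t * a22.
  have hT : Tup lam nu (- (L * bb)) s t (- (Nn * gg)) = 0.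
    apply: sumV_eq => /=.
    - by rewrite (_ : _ + _ = 0) ?scale0r // /bb; ring.
    - rewrite (_ : s + _ = a * s + b * t); last by rewrite /a /b /bb; ring.
      rewrite (_ : t + _ = c * s + d * t); last by rewrite /c /d /gg; ring.
      by rewrite h1 h2 !scale0r addr0.
    - by rewrite (_ : _ + _ = 0) ?scale0r // /gg; ring.
  have hU0 : U (- (L * bb)) s t (- (Nn * gg)) = 0.
    apply: (inj_gen hsip hsym hz (DU _ _ _ _)).
    by rewrite HU hT.
  have hmid : s *: sl + t *: sr = 0 := congr1 (fun v => v.1.2) hU0.
  have hb : bb = 0.
    by rewrite /bb -!(ipZr hipS) -(ipDr hipS) hmid (ip0r hipS).
  have hg : gg = 0.
    by rewrite /gg -!(ipZr hipS) -(ipDr hipS) hmid (ip0r hipS).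
  have s0 : s = 0.
    have : a * s + b * t = s - L * L * gl * bb by rewrite /a /b /bb; ring.
    by rewrite h1 hb mulr0 subr0.
  have t0 : t = 0.
    have : c * s + d * t = t - Nn * Nn * gr * gg by rewrite /c /d /gg; ring.
    by rewrite h2 hg mulr0 subr0.
  by case: nz; rewrite ?s0 ?t0 eqxx.
split.
- set s := d / Dz; set t := - c / Dz.
  set bb := s * a11 + t * a12; set gg := s * a21 + t * a22.
  have hT : Tup lam nu (- (L * bb)) s t (- (Nn * gg)) = el.
    apply: sumV_eq => /=.
    - by rewrite (_ : _ + _ = 0) ?scale0r // /bb /gg /s /t /L /Nn; ring.
    - rewrite (_ : s + _ = (a * d - b * c) / Dz); last by rewrite /bb /s /t /a /b /c /d /L /Nn; ring.
      rewrite (_ : t + _ = 0); last by rewrite /gg /s /t /a /b /c /d /L /Nn; ring.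
      by rewrite -eDz divff // scale1r scale0r addr0.
    - by rewrite (_ : _ + _ = 0) ?scale0r // /bb /gg /s /t /L /Nn; ring.
  rewrite /G /green (res _ _ _ _ _ _ _ hT) ipU_el.
  rewrite G0cr G0er G0el G0ler G0rel enu /bb /s /t /c /d; ring.
- set s := - (L * gl) * d / Dz; set t := L * gl * c / Dz.
  set bb := s * a11 + t * a12; set gg := s * a21 + t * a22.
  have hT : Tup lam nu (1 - L * bb) s t (- (Nn * gg)) = cl.
    apply: sumV_eq => /=.
    - by rewrite (_ : _ + _ = 1 :> R[i]) ?scale1r // /bb /gg /s /t /L /Nn; ring.
    - rewrite (_ : s + _ = (- (L * gl)) * (a * d - b * c) / Dz + L * gl); last first.
        by rewrite /bb /s /t /a /b /c /d /L /Nn; ring.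
      rewrite (_ : t + _ = 0); last by rewrite /gg /s /t /a /b /c /d /L /Nn; ring.
      by rewrite -eDz mulfK // addNr scale0r scale0r addr0.
    - by rewrite (_ : _ + _ = 0) ?scale0r // /bb /gg /s /t /L /Nn; ring.
  rewrite /G /green (res _ _ _ _ _ _ _ hT) ipU_cl.
  rewrite G0cl G0cr G0er enu.
  apply: (mulIf Dz0); rewrite divfK //.
  rewrite /bb /s /t eDz in Dz0 *; rewrite /a /b /c /d /L /Nn in Dz0 *.
  by field.
Qed.
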